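(* Let $A$ be a Noetherian commutative ring with identity, let $A[\mathbf{x}]=A[x_1,\ldots,x_n]$ be equipped with a monomial order, let $I\subset A[\mathbf{x}]$ be an ideal, and let $B=A/(I\cap A)$. Then $$\mathrm{in}(I)\,B[\mathbf{x}]=\mathrm{in}(I\,B[\mathbf{x}]).$$
   Context: A monomial order $>$ is a total order on monomials such that $\mathbf{x}^E>\mathbf{x}^F$ implies $\mathbf{x}^G\mathbf{x}^E>\mathbf{x}^G\mathbf{x}^F$, and $x_i>1$ for each $i$; the same order is used over $B$. $\mathrm{in}(f)$ is the greatest term $c\,\mathbf{x}^E$ ($c\neq0$) of a nonzero polynomial $f$; $\mathrm{in}(I)$ is the ideal generated by all $\mathrm{in}(f)$, $f\in I$. $K\,B[\mathbf{x}]$ denotes the ideal of $B[\mathbf{x}]$ generated by the image of $K\subset A[\mathbf{x}]$ under the coefficientwise quotient map. *)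

(* Defs.v *)
From HB Require Import structures.
From mathcomp Require Import all_boot all_order all_algebra.
From mathcomp Require Import mpoly.
Set Implicit Arguments. Unset Strict Implicit. Unset Printing Implicit Defensive.
Import GRing.Theory.
Local Open Scope ring_scope.

Definition is_ideal (R : comNzRingType) (J : R -> Prop) : Prop :=
  [/\ J 0, (forall x y, J x -> J y -> J (x + y)) & (forall r x, J x -> J (r * x))].

Definition gen_ideal (R : comNzRingType) (S : R -> Prop) : R -> Prop :=
  fun x => forall J : R -> Prop, is_ideal J -> (forall s, S s -> J s) -> J x.

Definition noetherian (R : comNzRingType) : Prop :=
  forall J : R -> Prop, is_ideal J ->
    exists s : seq R, forall x, J x <-> gen_ideal (fun y => y \in s) x.

Definition monomial_order (n : nat) (lt : rel 'X_{1..n}) : Prop :=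
  [/\ irreflexive lt,
      transitive lt,
      (forall E F : 'X_{1..n}, E != F -> lt E F || lt F E),
      (forall E F G : 'X_{1..n}, lt E F -> lt (G + E)%MM (G + F)%MM) &
      (forall i : 'I_n, lt 0%MM U_(i)%MM)].

Definition is_lead_mono (n : nat) (R : nzRingType) (lt : rel 'X_{1..n})
    (f : {mpoly R[n]}) (E : 'X_{1..n}) : Prop :=
  E \in msupp f /\ forall F, F \in msupp f -> F != E -> lt F E.

Definition initial_term (n : nat) (R : nzRingType) (lt : rel 'X_{1..n})
    (f t : {mpoly R[n]}) : Prop :=
  f != 0 /\ exists E, is_lead_mono lt f E /\ t = f@_E *: 'X_[E].

Definition initial_ideal (n : nat) (R : comNzRingType) (lt : rel 'X_{1..n})
    (I : {mpoly R[n]} -> Prop) : {mpoly R[n]} -> Prop :=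
  gen_ideal (fun t => exists f, I f /\ initial_term lt f t).

Definition ext_ideal (n : nat) (A B : comNzRingType) (phi : A -> B)
    (K : {mpoly A[n]} -> Prop) : {mpoly B[n]} -> Prop :=
  gen_ideal (fun q => exists p, K p /\ q = map_mpoly phi p).

(* Main.v *)
Require Import Defs.
From HB Require Import structures.
From mathcomp Require Import all_boot all_order all_algebra.
From mathcomp Require Import mpoly.
Import GRing.Theory.
Local Open Scope ring_scope.

Lemma gen_ideal_is_ideal (R : comNzRingType) (S : R -> Prop) : is_ideal (gen_ideal S).
Proof.
split.
- by move=> J [J0 _ _] _.
- by move=> x y Hx Hy J HJ HS; case: (HJ) => _ HD _; apply: HD; [apply: Hx|apply: Hy].
- by move=> r x Hx J HJ HS; case: (HJ) => _ _ HM; apply: HM; apply: Hx.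
Qed.

Lemma gen_ideal_sub (R : comNzRingType) (S : R -> Prop) s : S s -> gen_ideal S s.
Proof. by move=> Hs J _ HS; apply: HS. Qed.

Lemma gen_ideal_min (R : comNzRingType) (S J : R -> Prop) x :
  is_ideal J -> (forall s, S s -> J s) -> gen_ideal S x -> J x.
Proof. by move=> HJ HS Hx; apply: Hx. Qed.

Lemma ideal_neg (R : comNzRingType) (J : R -> Prop) x : is_ideal J -> J x -> J (- x).
Proof. by case=> _ _ HM Hx; rewrite -mulN1r; apply: HM. Qed.

Lemma preim_ideal n (A B : comNzRingType) (phi : {rmorphism A -> B})
  (J : {mpoly B[n]} -> Prop) : is_ideal J -> is_ideal (fun p => J (map_mpoly phi p)).
Proof.
case=> J0 JD JM; split.
- by rewrite raddf0.
- by move=> x y Hx Hy; rewrite raddfD; apply: JD.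
- by move=> r x Hx; rewrite rmorphM; apply: JM.
Qed.

Lemma lift_mpoly n (A B : comNzRingType) (phi : {rmorphism A -> B}) :
  (forall b : B, exists a : A, phi a = b) ->
  forall q : {mpoly B[n]}, exists p, map_mpoly phi p = q.
Proof.
move=> surj q.
suff: forall s, exists p, map_mpoly phi p = \sum_(m <- s) (q@_m *: 'X_[m]).
  by case/(_ (msupp q)) => p Hp; exists p; rewrite Hp -mpolyE.
elim=> [|m s [p Hp]]; first by exists 0; rewrite big_nil raddf0.
have [a Ha] := surj q@_m.
exists (a *: 'X_[m] + p); by rewrite big_cons -Hp raddfD /= (map_mpolyZ phi) (map_mpolyX phi) Ha.
Qed.

Lemma coef_filter n (A : comNzRingType) (s : seq 'X_{1..n}) (P : pred 'X_{1..n})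
  (c : 'X_{1..n} -> A) F : uniq s ->
  (\sum_(m <- s | P m) (c m *: 'X_[m] : {mpoly A[n]}))@_F =
    if (F \in s) && P F then c F else 0.
Proof.
elim: s => [|x s IH]; first by rewrite big_nil mcoeff0.
rewrite cons_uniq => /andP [xs us]; rewrite big_cons in_cons.
have E : (\sum_(j <- s | P j) (c j *: 'X_[j] : {mpoly A[n]}))@_F =
    if (F \in s) && P F then c F else 0 by exact: IH.
case Px: (P x) => /=; last first.
  rewrite E; case: (eqVneq F x) => [->|] //=.
  by rewrite (negbTE xs) Px.
rewrite mcoeffD mcoeffZ mcoeffX E.
case: (eqVneq x F) => [<-|nxF] /=.
  by rewrite (negbTE xs) /= mulr1 addr0 Px.
by rewrite mulr0 add0r.
Qed.

Lemma image_ideal n (A B : comNzRingType) (phi : {rmorphism A -> B})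
  (I : {mpoly A[n]} -> Prop) :
  is_ideal I -> (forall b : B, exists a : A, phi a = b) ->
  forall g, ext_ideal phi I g -> exists f, I f /\ g = map_mpoly phi f.
Proof.
move=> [I0 ID IM] surj g Hg; apply: (Hg (fun g => exists f, I f /\ g = map_mpoly phi f)).
- split.
  + by exists 0; split => //; rewrite raddf0.
  + move=> x y [f1 [H1 ->]] [f2 [H2 ->]]; exists (f1 + f2); split; first exact: ID.
    by rewrite raddfD.
  + move=> r x [f [Hf ->]]; have [r' <-] := @lift_mpoly n A B phi surj r.
    by exists (r' * f); split; [exact: IM | rewrite rmorphM].
- by move=> s [p [Hp ->]]; exists p.
Qed.

Theorem lemma3p9 (n : nat) (A : comNzRingType) (lt : rel 'X_{1..n})
    (I : {mpoly A[n]} -> Prop) (B : comNzRingType) (phi : {rmorphism A -> B}) :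
  noetherian A ->
  monomial_order lt ->
  is_ideal I ->
  (* B = A/(I ∩ A), presented by a surjective ring morphism with kernel I ∩ A *)
  (forall b : B, exists a : A, phi a = b) ->
  (forall a : A, phi a = 0 <-> I (a%:MP)) ->
  forall q : {mpoly B[n]},
    ext_ideal phi (initial_ideal lt I) q <->
    initial_ideal lt (ext_ideal phi I) q.
Proof.
move=> _ _ HI surj ker q; split.
- apply: (@gen_ideal_min _ _ (initial_ideal lt (ext_ideal phi I))); first exact: gen_ideal_is_ideal.
  move=> s [p [Hp ->]].
  move: Hp; apply: (@gen_ideal_min _ _ (fun p => initial_ideal lt (ext_ideal phi I) (map_mpoly phi p))); first exact/preim_ideal/gen_ideal_is_ideal.
  move=> t [f [If [fn0 [E [[EH Elt] ->]]]]].
  rewrite (map_mpolyZ phi) (map_mpolyX phi).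
  have [c0|cn0] := eqVneq (phi f@_E) 0.
    by rewrite c0 scale0r; case: (@gen_ideal_is_ideal _
      (fun t => exists f, ext_ideal phi I f /\ initial_term lt f t)).
  apply: gen_ideal_sub; exists (map_mpoly phi f); split.
    by apply: gen_ideal_sub; exists f.
  have cE : (map_mpoly phi f)@_E = phi f@_E by rewrite mcoeff_map_mpoly.
  split.
    by apply/eqP => h; move: cn0; rewrite -cE h mcoeff0 eqxx.
  exists E; split; last by rewrite cE.
  split; first by rewrite mcoeff_msupp cE.
  move=> F; rewrite mcoeff_msupp mcoeff_map_mpoly => hF; apply: Elt.
  rewrite mcoeff_msupp; apply: contra hF => /eqP ->. by rewrite raddf0.
- apply: (@gen_ideal_min _ _ (ext_ideal phi (initial_ideal lt I))); first exact: gen_ideal_is_ideal.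
  move=> t [g [Hg [gn0 [E [[EH Elt] ->]]]]].
  have [f [If gf]] := @image_ideal n A B phi I HI surj g Hg; subst g.
  pose P := fun m => phi f@_m == 0.
  pose f2 := \sum_(m <- msupp f | P m) (f@_m *: 'X_[m] : {mpoly A[n]}).
  pose f1 := f - f2.
  have If2 : I f2.
    case: (HI) => I0 ID IM.
    apply: big_ind => //= m /eqP Pm.
    by rewrite -mul_mpolyC mulrC; apply: IM; apply/ker.
  have If1 : I f1 by case: (HI) => _ ID _; apply: ID => //; apply: ideal_neg.
  have c1 : forall F, f1@_F = f@_F - (if (F \in msupp f) && P F then f@_F else 0).
    by move=> F; rewrite mcoeffB coef_filter // msupp_uniq.
  have phi1 : forall F, phi f1@_F = phi f@_F.
    move=> F; rewrite c1; case: ifP => [/andP [_ /eqP h]|_]; last by rewrite subr0.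
    by rewrite subrr raddf0 h.
  have nz1 : forall F, f1@_F != 0 -> phi f@_F != 0.
    move=> F; rewrite c1; case: ifP => [|]; first by rewrite subrr eqxx.
    move=> h; rewrite subr0 => fn; apply/negP => /eqP pz; move: h.
    by rewrite /P pz eqxx andbT mcoeff_msupp fn.
  have ef : map_mpoly phi f = map_mpoly phi f1.
    apply/mpolyP => F; rewrite !mcoeff_map_mpoly. symmetry; exact: phi1.
  rewrite ef in EH Elt gn0 *.
  have gE : (map_mpoly phi f1)@_E = phi f1@_E by rewrite mcoeff_map_mpoly.
  rewrite gE -(map_mpolyX phi) -(map_mpolyZ phi).
  apply: gen_ideal_sub; exists (f1@_E *: 'X_[E]); split => //.
  apply: gen_ideal_sub; exists f1; split => //.
  have E1 : f1@_E != 0.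
    by apply/eqP => h; move: EH; rewrite mcoeff_msupp mcoeff_map_mpoly h raddf0 eqxx.
  split.
    by apply/eqP => h; move: E1; rewrite h mcoeff0 eqxx.
  exists E; split => //; split; first by rewrite mcoeff_msupp.
  move=> F; rewrite mcoeff_msupp => /nz1 hF; apply: Elt.
  by rewrite mcoeff_msupp mcoeff_map_mpoly -phi1 in hF *.
Qed.
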